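(* Assume (V1), (V2), (V3), and (In), and let $\delta>0$. Then for every $n\in\mathbb{N}$ and all $t\ge\delta$, $$\mathrm{TV}[v(\hat\rho^n(t))]=\mathrm{TV}[v(\check\rho^n(t))]\le C_\delta,\qquad C_\delta:=3(v_{\max}-v(R))+2\,\frac{\bar x_{\max}-\bar x_{\min}}{\delta}.$$ In particular $(v(\hat\rho^n))_n$ is uniformly bounded in $L^\infty([\delta,\infty);BV(\mathbb{R};[v(R),v_{\max}]))$ and $(v(\check\rho^n))_n$ is uniformly bounded in $L^\infty([\delta,\infty);BV([0,L];[v(R),v_{\max}]))$.
   Context: (V1): $v\in C^1([0,\infty))$ strictly decreasing; (V2): $v(0)=v_{\max}\in\mathbb{R}$; (V3): $\rho\mapsto\rho\,v'(\rho)$ is non-increasing on $[0,\infty)$. $\mathcal{M}_L$: nonnegative compactly supported Radon measures on $\mathbb{R}$ of mass $L>0$. (In): $\bar\rho\in\mathcal{M}_L\cap L^\infty(\mathbb{R})$; $R:=\|\bar\rho\|_{L^\infty}$; $[\bar x_{\min},\bar x_{\max}]$ smallest closed interval containing $\mathrm{supp}\,\bar\rho$. For $n\in\mathbb{N}$: $N_n=2^n$, $\ell_n=2^{-n}L$, $\bar x^n_0=\bar x_{\min}$, $\bar x^n_i=\sup\{x:\int_{\bar x^n_{i-1}}^x\bar\rho<\ell_n\}$; $(x^n_i(t))$ solves $\dot x^n_{N_n}=v_{\max}$, $\dot x^n_i=v(\ell_n/(x^n_{i+1}-x^n_i))$, $x^n_i(0)=\bar x^n_i$; $y^n_i:=\ell_n/(x^n_{i+1}-x^n_i)$.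 $\hat\rho^n(t,x):=\sum_{i=0}^{N_n-1}y^n_i(t)\chi_{[x^n_i(t),x^n_{i+1}(t))}(x)$, $\check\rho^n(t,z):=\sum_{i=0}^{N_n-1}y^n_i(t)\chi_{[i\ell_n,(i+1)\ell_n)}(z)$, $z\in[0,L]$. *)

(* Defs.v *)
From Stdlib Require Import Reals Lra List Sorted ClassicalEpsilon.
Open Scope R_scope.

(** Supremum of a set of reals (the least upper bound when the set is
    nonempty and bounded above; junk value 0 otherwise). *)
Definition Rsup (E : R -> Prop) : R :=
  match excluded_middle_informative (bound E /\ exists x, E x) with
  | left H => proj1_sig (completeness E (proj1 H) (proj2 H))
  | right _ => 0
  end.

Fixpoint sumR (N : nat) (f : nat -> R) : R :=
  match N with
  | O => 0
  | S k => sumR k f + f k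
  end.

Definition ind_co (a b X : R) : R :=
  if Rle_dec a X then (if Rlt_dec X b then 1 else 0) else 0.

Definition Nn (n : nat) : nat := (2 ^ n)%nat.
Definition elln (L : R) (n : nat) : R := L / 2 ^ n.

(** Initial particle positions:  xbar_0 = xmin,
    xbar_i = sup { x | int_{xbar_{i-1}}^x rhobar < l },
    where G is the cumulative mass G(x) = int_{-oo}^x rhobar. *)
Fixpoint xbar (G : R -> R) (xmin l : R) (i : nat) : R :=
  match i with
  | O => xmin
  | S k => Rsup (fun x => G x - G (xbar G xmin l k) < l)
  end.

Definition ydisc (x : nat -> R -> R) (l : R) (i : nat) (t : R) : R :=
  l / (x (S i) t - x i t).

Definition rho_hat (x : nat -> R -> R) (l : R) (N : nat) (t X : R) : R :=
  sumR N (fun i => ydisc x l i t * ind_co (x i t) (x (S i) t) X).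

Definition rho_check (x : nat -> R -> R) (l : R) (N : nat) (t z : R) : R :=
  sumR N (fun i => ydisc x l i t * ind_co (INR i * l) (INR (S i) * l) z).

(** The follow-the-leader system:  x_N' = v_max = v 0,
    x_i' = v(l/(x_{i+1}-x_i)), x_i(0) = xb_i, solved on [0,oo)
    (ODE for t > 0, continuity at t = 0, gaps positive so y_i makes sense). *)
Definition FTL_solution (v : R -> R) (N : nat) (l : R) (xb : nat -> R)
    (x : nat -> R -> R) : Prop :=
  (forall i, (i <= N)%nat -> x i 0 = xb i) /\
  (forall i, (i < N)%nat -> forall t, 0 <= t -> x i t < x (S i) t) /\
  (forall i, (i <= N)%nat -> forall eps, 0 < eps -> exists d, 0 < d /\
      forall t, 0 <= t < d -> Rabs (x i t - x i 0) < eps) /\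
  (forall t, 0 < t -> derivable_pt_lim (x N) t (v 0)) /\
  (forall i, (i < N)%nat -> forall t, 0 < t ->
      derivable_pt_lim (x i) t (v (ydisc x l i t))).

Fixpoint variation (f : R -> R) (l : list R) : R :=
  match l with
  | a :: ((b :: _) as tl) => Rabs (f b - f a) + variation f tl
  | _ => 0
  end.

Definition TV_le (f : R -> R) (C : R) : Prop :=
  forall l, Sorted Rlt l -> variation f l <= C.

Definition TV (f : R -> R) : R :=
  Rsup (fun s => exists l, Sorted Rlt l /\ s = variation f l).

(* Main.v *)
Require Import Defs.
From Stdlib Require Import Reals Lra Lia Arith List Sorted Classical ClassicalEpsilon.
Open Scope R_scope.

Lemma sumR_S m g : sumR (S m) g = sumR m g + g m.
Proof. reflexivity. Qed.

Lemma sumR_ext N f g : (forall i, (i < N)%nat -> f i = g i) -> sumR N f = sumR N g.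
Proof.
  induction N; simpl; intros H; auto.
  rewrite IHN by (intros; apply H; lia). rewrite H by lia. reflexivity.
Qed.

Lemma sumR_shift m g : sumR (S m) g = g 0%nat + sumR m (fun k => g (S k)).
Proof.
  induction m; simpl in *. lra. rewrite IHm. lra.
Qed.

Lemma sumR_tele m (U : nat -> R) : sumR m (fun k => U (S k) - U k) = U m - U 0%nat.
Proof. induction m; simpl. lra. rewrite IHm. lra. Qed.

Lemma sumR_le N f g : (forall i, (i < N)%nat -> f i <= g i) -> sumR N f <= sumR N g.
Proof.
  induction N; simpl; intros H. lra.
  assert (sumR N f <= sumR N g) by (apply IHN; intros; apply H; lia).
  assert (f N <= g N) by (apply H; lia). lra.
Qed.

Lemma sumR_plus N f g : sumR N (fun i => f i + g i) = sumR N f + sumR N g.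
Proof. induction N; simpl. lra. rewrite IHN. lra. Qed.

Lemma sumR_scal N a f : sumR N (fun i => a * f i) = a * sumR N f.
Proof. induction N; simpl. lra. rewrite IHN. lra. Qed.

Lemma sumR_ge0 N f : (forall i, (i < N)%nat -> 0 <= f i) -> 0 <= sumR N f.
Proof.
  intros H. apply Rle_trans with (sumR N (fun _ => 0)).
  clear. induction N; simpl; lra. apply sumR_le. auto.
Qed.

Lemma sumR_single N g j : (forall i, (i < N)%nat -> i <> j -> g i = 0) ->
  sumR N g = if Nat.ltb j N then g j else 0.
Proof.
  induction N; intros H; simpl. reflexivity.
  rewrite IHN by (intros; apply H; lia).
  destruct (Nat.ltb j N) eqn:E1; destruct (Nat.ltb j (S N)) eqn:E2;
    apply Nat.ltb_lt in E1 || apply Nat.ltb_ge in E1;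
    apply Nat.ltb_lt in E2 || apply Nat.ltb_ge in E2; try lia.
  - rewrite (H N) by lia. lra.
  - assert (j = N) by lia. subst. lra.
  - rewrite (H N) by lia. lra.
Qed.

Definition Fst (p c : nat -> R) (N : nat) (X : R) : R :=
  sumR N (fun i => c i * ind_co (p i) (p (S i)) X).

Definition stepv (c : nat -> R) (N k : nat) : R :=
  match k with O => 0 | S j => if Nat.ltb j N then c j else 0 end.

Definition pos (p : nat -> R) (N : nat) (X : R) (k : nat) : Prop :=
  (k <= S N)%nat /\ (k = 0%nat \/ p (pred k) <= X) /\ (k = S N \/ X < p k).

Lemma p_mono p N : (forall i, (i < N)%nat -> p i < p (S i)) ->
  forall i j, (i <= j)%nat -> (j <= N)%nat -> p i <= p j.
Proof.
  intros H i j Hij. induction Hij; intros HjN. lra.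
  assert (p i <= p m) by (apply IHHij; lia). assert (p m < p (S m)) by (apply H; lia). lra.
Qed.

Lemma pos_exists p N X : exists k, pos p N X k.
Proof.
  assert (forall m, (m <= S N)%nat -> (exists k, (k < m)%nat /\ pos p N X k) \/ (m = 0%nat \/ p (pred m) <= X)).
  { induction m; intros Hm. right; left; reflexivity.
    destruct (IHm ltac:(lia)) as [[k [Hk1 Hk2]]|Hr].
    - left. exists k. split; [lia|auto].
    - destruct (Rlt_dec X (p m)).
      + left. exists m. split. lia. unfold pos. split. lia. split. auto. right; auto.
      + right. right. simpl. lra. }
  destruct (H (S N) ltac:(lia)) as [[k [_ Hk]]|[Hr|Hr]]. eauto. discriminate.
  exists (S N). unfold pos. split. lia. split. right; auto. left; auto.
Qed.

Lemma pos_mono p N (Hp : forall i, (i < N)%nat -> p i < p (S i)) a b ka kb :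
  a < b -> pos p N a ka -> pos p N b kb -> (ka <= kb)%nat.
Proof.
  intros Hab [Ha1 [Ha2 Ha3]] [Hb1 [Hb2 Hb3]].
  destruct (le_lt_dec ka kb) as [|Hlt]; auto. exfalso.
  destruct Hb3 as [Hb3|Hb3]. lia.
  destruct Ha2 as [Ha2|Ha2]. lia.
  assert (p kb <= p (pred ka)) by (apply (p_mono p N Hp); lia). lra.
Qed.

Lemma ind_co_1 a b X : a <= X -> X < b -> ind_co a b X = 1.
Proof. intros. unfold ind_co. destruct (Rle_dec a X); destruct (Rlt_dec X b); lra. Qed.
Lemma ind_co_0l a b X : X < a -> ind_co a b X = 0.
Proof. intros. unfold ind_co. destruct (Rle_dec a X); try destruct (Rlt_dec X b); lra. Qed.
Lemma ind_co_0r a b X : b <= X -> ind_co a b X = 0.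
Proof. intros. unfold ind_co. destruct (Rle_dec a X); try destruct (Rlt_dec X b); lra. Qed.

Lemma Fst_pos p c N (Hp : forall i, (i < N)%nat -> p i < p (S i)) X k :
  pos p N X k -> Fst p c N X = stepv c N k.
Proof.
  intros [H1 [H2 H3]]. unfold Fst.
  set (j := match k with O => N | S j => j end).
  rewrite (sumR_single N _ j).
  - destruct k as [|k'].
    + unfold j. rewrite Nat.ltb_irrefl. reflexivity.
    + unfold j. simpl. destruct (Nat.ltb k' N) eqn:E; auto.
      apply Nat.ltb_lt in E. rewrite ind_co_1. lra.
      destruct H2. lia. simpl in *. lra. destruct H3. lia. lra.
  - intros i Hi Hij. destruct k as [|k'].
    + destruct H3 as [H3|H3]. lia. rewrite ind_co_0l. lra.
      assert (p 0%nat <= p i) by (apply (p_mono p N Hp); lia). lra.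
    + unfold j in Hij. destruct H2 as [H2|H2]. lia. simpl in H2.
      destruct (le_lt_dec i k').
      * rewrite ind_co_0r. lra.
        assert (p (S i) <= p k') by (apply (p_mono p N Hp); lia). lra.
      * destruct H3 as [H3|H3]. lia. rewrite ind_co_0l. lra.
        assert (p (S k') <= p i) by (apply (p_mono p N Hp); lia). lra.
Qed.

Lemma variation_cons2 f a b l : variation f (a :: b :: l) = Rabs (f b - f a) + variation f (b :: l).
Proof. reflexivity. Qed.

Lemma variation_nonneg f l : 0 <= variation f l.
Proof.
  induction l as [|a l IH]. simpl; lra.
  destruct l as [|b l]. simpl; lra. rewrite variation_cons2.
  pose proof (Rabs_pos (f b - f a)). lra.
Qed.

Section StepTV.
Variables (p c : nat -> R) (N : nat) (phi : R -> R).
Hypothesis Hp : forall i, (i < N)%nat -> p i < p (S i).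
Let U k := phi (stepv c N k).
Let D k := Rabs (U (S k) - U k).
Definition PSt j := sumR j (fun k => Rabs (phi (stepv c N (S k)) - phi (stepv c N k))).
Let f X := phi (Fst p c N X).

Lemma PSt_tri a b : (a <= b)%nat -> Rabs (U b - U a) <= PSt b - PSt a.
Proof.
  intros H. induction H. unfold Rminus; rewrite Rplus_opp_r, Rabs_R0. lra.
  unfold PSt in *. rewrite sumR_S. fold (U m) (U (S m)).
  pose proof (Rabs_triang (U (S m) - U m) (U m - U a)).
  replace (U (S m) - U m + (U m - U a)) with (U (S m) - U a) in H0 by ring. lra.
Qed.

Lemma PSt_mono a b : (a <= b)%nat -> PSt a <= PSt b.
Proof.
  intros H. pose proof (PSt_tri a b H). pose proof (Rabs_pos (U b - U a)). lra.
Qed.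

Lemma var_bound_aux l : forall a ka, Sorted Rlt (a :: l) -> pos p N a ka ->
  variation f (a :: l) <= PSt (S N) - PSt ka.
Proof.
  induction l as [|b l IH]; intros a ka Hs Hka.
  - simpl. destruct Hka as [Hk _]. pose proof (PSt_mono _ _ Hk). lra.
  - rewrite variation_cons2. destruct (pos_exists p N b) as [kb Hkb].
    apply Sorted_inv in Hs. destruct Hs as [Hs Hh]. apply HdRel_inv in Hh.
    pose proof (pos_mono p N Hp a b ka kb Hh Hka Hkb).
    pose proof (IH b kb Hs Hkb).
    unfold f. rewrite (Fst_pos p c N Hp a ka Hka), (Fst_pos p c N Hp b kb Hkb).
    pose proof (PSt_tri ka kb H). fold (U ka) (U kb). fold f. lra.
Qed.

Lemma var_bound l : Sorted Rlt l -> variation f l <= PSt (S N).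
Proof.
  intros Hs. destruct l as [|a l]. simpl. apply sumR_ge0. intros; apply Rabs_pos.
  destruct (pos_exists p N a) as [ka Hka].
  pose proof (var_bound_aux l a ka Hs Hka).
  assert (0 <= PSt ka) by (apply sumR_ge0; intros; apply Rabs_pos). lra.
Qed.

Let q k := match k with O => p O - 1 | S j => p j end.

Lemma q_pos k : (k <= S N)%nat -> pos p N (q k) k.
Proof.
  intros H. split. auto. destruct k as [|j]; simpl.
  - split. left; auto. right. lra.
  - split. right; lra. destruct (Nat.eq_dec j N). left; lia. right. apply Hp. lia.
Qed.

Lemma q_sorted m a : (forall k, (a <= k)%nat -> (k < a + m)%nat -> q k < q (S k)) ->
  Sorted Rlt (map q (seq a (S m))).
Proof.
  revert a. induction m; intros a H. simpl. repeat constructor.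
  change (map q (seq a (S (S m)))) with (q a :: map q (seq (S a) (S m))).
  constructor. apply IHm. intros; apply H; lia.
  change (map q (seq (S a) (S m))) with (q (S a) :: map q (seq (S (S a)) m)).
  constructor. apply H; lia.
Qed.

Lemma q_var m a g : variation g (map q (seq a (S m))) =
   sumR m (fun i => Rabs (g (q (S (a + i))) - g (q (a + i)))).
Proof.
  revert a. induction m; intros a. reflexivity.
  change (map q (seq a (S (S m)))) with (q a :: map q (seq (S a) (S m))).
  rewrite sumR_shift.
  change (map q (seq (S a) (S m))) with (q (S a) :: map q (seq (S (S a)) m)).
  rewrite variation_cons2.
  change (q (S a) :: map q (seq (S (S a)) m)) with (map q (seq (S a) (S m))).
  rewrite IHm;
  rewrite Nat.add_0_r; f_equal; apply sumR_ext; intros; f_equal; f_equal; f_equal; f_equal; lia.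
Qed.

Lemma var_attain : exists l, Sorted Rlt l /\ variation f l = PSt (S N).
Proof.
  exists (map q (seq 0 (S (S N)))). split.
  - apply q_sorted. intros k _ Hk. destruct k as [|j]; simpl. lra. apply Hp. lia.
  - rewrite q_var. unfold PSt. apply sumR_ext. intros i Hi. simpl.
    unfold f. rewrite (Fst_pos p c N Hp _ (S i)) by (apply q_pos; lia).
    rewrite (Fst_pos p c N Hp _ i) by (apply q_pos; lia). reflexivity.
Qed.

End StepTV.

Lemma Rsup_max E M : E M -> (forall s, E s -> s <= M) -> Rsup E = M.
Proof.
  intros HM Hb. unfold Rsup.
  destruct excluded_middle_informative as [H|H].
  - destruct (completeness E _ _) as [m [Hm1 Hm2]]. simpl.
    apply Rle_antisym. apply Hm2. intros s Hs; auto. apply Hm1; auto.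
  - exfalso. apply H. split. exists M. intros s Hs; auto. eauto.
Qed.

Lemma TV_step p c N phi (Hp : forall i, (i < N)%nat -> p i < p (S i)) :
  TV (fun X => phi (Fst p c N X)) = PSt c N phi (S N) /\
  TV_le (fun X => phi (Fst p c N X)) (PSt c N phi (S N)).
Proof.
  split.
  - unfold TV. apply Rsup_max.
    destruct (var_attain p c N phi Hp) as [l [H1 H2]]. exists l. auto.
    intros s [l [H1 H2]]. subst. apply var_bound; auto.
  - intros l Hl. apply var_bound; auto.
Qed.

Definition cont0 (g : R -> R) : Prop := forall s, 0 <= s -> forall eps, 0 < eps ->
  exists d, 0 < d /\ forall u, 0 <= u -> Rabs (u - s) < d -> Rabs (g u - g s) < eps.

Lemma cont_pt_eps f s : continuity_pt f s -> forall eps, 0 < eps ->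
  exists d, 0 < d /\ forall u, Rabs (u - s) < d -> Rabs (f u - f s) < eps.
Proof.
  intros H eps He. destruct (H eps He) as [d [Hd Hu]]. exists d. split; auto.
  intros u Hus. destruct (Req_dec u s). subst. unfold Rminus; rewrite Rplus_opp_r, Rabs_R0; lra.
  apply Hu. split. split. exact I. auto. exact Hus.
Qed.

Lemma eps_cont_pt f s : (forall eps, 0 < eps ->
  exists d, 0 < d /\ forall u, Rabs (u - s) < d -> Rabs (f u - f s) < eps) -> continuity_pt f s.
Proof.
  intros H eps He. destruct (H eps He) as [d [Hd Hu]]. exists d. split; auto.
  intros u [_ Hus]. apply Hu. exact Hus.
Qed.

Lemma cont0_of h g : (forall s, 0 <= s -> continuity_pt h s) -> (forall u, 0 <= u -> h u = g u) -> cont0 g.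
Proof.
  intros Hc He s Hs eps Heps. destruct (cont_pt_eps h s (Hc s Hs) eps Heps) as [d [Hd Hu]].
  exists d. split; auto. intros u Hu0 Hus. rewrite <- (He u Hu0), <- (He s Hs). auto.
Qed.

Lemma dlim_ext f g x l l' : derivable_pt_lim f x l -> (forall u, f u = g u) -> l = l' ->
  derivable_pt_lim g x l'.
Proof.
  intros H He Hl eps Heps. destruct (H eps Heps) as [d Hd]. exists d. intros h H1 H2.
  rewrite <- !He, <- Hl. auto.
Qed.

Lemma finite_min (P : nat -> R -> Prop) N :
  (forall k d d', 0 < d' <= d -> P k d -> P k d') ->
  (forall k, (k < N)%nat -> exists d, 0 < d /\ P k d) ->
  exists d, 0 < d /\ forall k, (k < N)%nat -> P k d.
Proof.
  intros Hm. induction N; intros H. exists 1. split. lra. intros; lia.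
  destruct IHN as [d1 [Hd1 H1]]. intros; apply H; lia.
  destruct (H N ltac:(lia)) as [d2 [Hd2 H2]].
  exists (Rmin d1 d2). split. apply Rmin_glb_lt; auto.
  intros k Hk. destruct (Nat.eq_dec k N).
  - subst. apply (Hm N d2). split. apply Rmin_glb_lt; auto. apply Rmin_r. auto.
  - apply (Hm k d1). split. apply Rmin_glb_lt; auto. apply Rmin_l. apply H1. lia.
Qed.

Lemma crossing (N : nat) (f : nat -> R -> R) (c : R) :
  (forall k, (k < N)%nat -> cont0 (f k)) ->
  (forall k, (k < N)%nat -> f k 0 < c) ->
  (forall i tau, (i < N)%nat -> 0 < tau -> f i tau = c ->
     (forall k, (k < N)%nat -> f k tau <= c) ->
     exists d, d < 0 /\ derivable_pt_lim (f i) tau d) ->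
  forall t k, 0 <= t -> (k < N)%nat -> f k t < c.
Proof.
  intros Hc Hi Hx t1 j Ht1 Hj.
  apply Rnot_le_lt. intros Hf.
  assert (Hunif : forall s, 0 <= s -> (forall k, (k < N)%nat -> f k s < c) ->
     exists d, 0 < d /\ forall k, (k < N)%nat -> forall u, 0 <= u -> Rabs (u - s) < d -> f k u < c).
  { intros s Hs Hall.
    apply (finite_min (fun k d => forall u, 0 <= u -> Rabs (u - s) < d -> f k u < c)).
    - intros k d d' Hd' HP u Hu Hus. apply HP; auto. lra.
    - intros k Hk. destruct (Hc k Hk s Hs (c - f k s)) as [d [Hd Hu]].
      pose proof (Hall k Hk). lra. exists d. split; auto. intros u Hu0 Hus.
      specialize (Hu u Hu0 Hus). apply Rabs_def2 in Hu. lra. }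
  set (E := fun s => 0 <= s <= t1 /\ forall u k, 0 <= u <= s -> (k < N)%nat -> f k u < c).
  assert (HE0 : E 0).
  { split. lra. intros u k Hu Hk. replace u with 0 by lra. auto. }
  assert (Hb : bound E). { exists t1. intros s [Hs _]. lra. }
  destruct (completeness E Hb (ex_intro _ 0 HE0)) as [tau [Hub Hlub]].
  assert (P1 : forall u k, 0 <= u < tau -> (k < N)%nat -> f k u < c).
  { intros u k Hu Hk. destruct (classic (exists s, E s /\ u < s)) as [[s [[_ Hs] Hus]]|Hn].
    - apply (Hs u k); auto. lra.
    - exfalso. assert (tau <= u). apply Hlub. intros s Hs. apply Rnot_lt_le. intros Hlt.
      apply Hn. eauto. lra. }
  assert (P4 : tau <= t1). { apply Hlub. intros s [Hs _]. lra. }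
  assert (P2 : 0 < tau).
  { destruct (Hunif 0 (Rle_refl 0) Hi) as [d [Hd Hu]].
    assert (t1 <> 0). { intros ->. specialize (Hi j Hj). lra. }
    assert (E (Rmin (d/2) t1)).
    { split. split. apply Rmin_glb; lra. apply Rmin_r.
      intros u k [Hu1 Hu2] Hk. apply (Hu k Hk u Hu1).
      rewrite Rminus_0_r, Rabs_right by lra. pose proof (Rmin_l (d/2) t1). lra. }
    pose proof (Hub _ H0). assert (0 < Rmin (d/2) t1). apply Rmin_glb_lt; lra. lra. }
  assert (P3 : forall k, (k < N)%nat -> f k tau <= c).
  { intros k Hk. apply Rnot_lt_le. intros Hlt.
    destruct (Hc k Hk tau ltac:(lra) (f k tau - c) ltac:(lra)) as [d [Hd Hu]].
    set (u := tau - Rmin d tau / 2).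
    assert (0 < Rmin d tau) by (apply Rmin_glb_lt; lra).
    assert (Hu0 : 0 <= u) by (unfold u; pose proof (Rmin_r d tau); lra).
    assert (Hus : Rabs (u - tau) < d).
    { unfold u. rewrite Rabs_left by lra. pose proof (Rmin_l d tau). lra. }
    specialize (Hu u Hu0 Hus). apply Rabs_def2 in Hu.
    assert (f k u < c) by (apply P1; auto; unfold u; pose proof (Rmin_r d tau); lra). lra. }
  assert (P5 : exists i, (i < N)%nat /\ f i tau = c).
  { apply NNPP. intros Hn.
    assert (Hall : forall k, (k < N)%nat -> f k tau < c).
    { intros k Hk. destruct (P3 k Hk); auto. exfalso. apply Hn. eauto. }
    assert (tau < t1). { destruct P4; auto. subst. specialize (Hall j Hj). lra. }
    destruct (Hunif tau ltac:(lra) Hall) as [d [Hd Hu]].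
    set (s := Rmin (tau + d/2) t1).
    assert (E s).
    { split. split. unfold s; apply Rmin_glb; lra. apply Rmin_r.
      intros u k [Hu1 Hu2] Hk. destruct (Rlt_dec u tau). apply P1; auto.
      apply (Hu k Hk u Hu1). rewrite Rabs_right by lra. unfold s in Hu2.
      pose proof (Rmin_l (tau + d/2) t1). lra. }
    pose proof (Hub s H0). assert (tau < s). unfold s; apply Rmin_glb_lt; lra. lra. }
  destruct P5 as [i [Hi' Hfi]].
  destruct (Hx i tau Hi' P2 Hfi P3) as [d [Hd Hder]].
  destruct (Hder (-d) ltac:(lra)) as [del Hdel].
  set (h := - (Rmin del tau / 2)).
  assert (0 < Rmin del tau) by (apply Rmin_glb_lt; [apply cond_pos|lra]).
  assert (Hh0 : h <> 0) by (unfold h; lra).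
  assert (Hh1 : Rabs h < del) by (unfold h; rewrite Rabs_left by lra; pose proof (Rmin_l del tau); lra).
  specialize (Hdel h Hh0 Hh1). apply Rabs_def2 in Hdel. destruct Hdel as [Hd1 _].
  assert (f i (tau + h) < c). { apply P1; auto. unfold h. pose proof (Rmin_r del tau). lra. }
  assert ((f i (tau + h) - f i tau) / h > 0).
  { unfold Rdiv. apply Rmult_neg_neg. lra. apply Rinv_lt_0_compat. unfold h; lra. }
  lra.
Qed.
Lemma Rsup_lub E : bound E -> (exists x, E x) -> is_lub E (Rsup E).
Proof.
  intros Hb He. unfold Rsup. destruct excluded_middle_informative as [H|H].
  - destruct (completeness E _ _) as [m Hm]. simpl. auto.
  - exfalso; auto.
Qed.
Lemma xbar_props (G : R -> R) (Rb xmin xmax L l : R) (N : nat)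
  (HG_lip : forall a b, Rabs (G b - G a) <= Rb * Rabs (b - a))
  (HRb : 0 <= Rb) (Hl : 0 < l) (HNl : INR N * l = L)
  (HG_left : forall x, x <= xmin -> G x = 0)
  (HG_right : forall x, xmax <= x -> G x = L) :
  forall k, (k <= N)%nat -> G (xbar G xmin l k) = INR k * l /\
     ((1 <= k)%nat -> xbar G xmin l k <= xmax).
Proof.
  induction k; intros Hk.
  - simpl. split. rewrite HG_left; lra. intros; lia.
  - destruct (IHk ltac:(lia)) as [IH _].
    set (gk := G (xbar G xmin l k)) in *.
    set (E := fun x => G x - gk < l).
    assert (HkN : INR (S k) <= INR N) by (apply le_INR; lia).
    rewrite S_INR in HkN.
    assert (HE : E xmin). { unfold E. rewrite HG_left by lra. pose proof (pos_INR k). nra. }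
    assert (Hb : forall x, E x -> x <= xmax).
    { intros x Hx. apply Rnot_lt_le. intros Hlt. unfold E in Hx. rewrite HG_right in Hx by lra. nra. }
    assert (Hlub : is_lub E (Rsup E)) by (apply Rsup_lub; [exists xmax; auto|eauto]).
    change (xbar G xmin l (S k)) with (Rsup E).
    set (s := Rsup E) in *. destruct Hlub as [Hub Hl2].
    assert (Hs : s <= xmax) by (apply Hl2; intros x Hx; auto).
    split; [|intros; auto].
    rewrite S_INR.
    assert (HRb1 : 0 < Rb + 1) by lra.
    apply Rle_antisym.
    + apply Rnot_lt_le. intros Hlt. set (e := G s - gk - l).
      assert (He : 0 < e) by (unfold e; lra).
      destruct (classic (exists x, E x /\ s - e / (Rb + 1) < x)) as [[x [Hx Hxs]]|Hn].
      * assert (Hxs2 : x <= s) by auto.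
        pose proof (HG_lip x s). rewrite (Rabs_right (s - x)) in H by lra.
        assert (Rb * (s - x) <= Rb * (e / (Rb+1))).
        { apply Rmult_le_compat_l. lra. lra. }
        assert (Rb * (e / (Rb + 1)) < e).
        { apply Rlt_le_trans with ((Rb + 1) * (e / (Rb + 1))).
          apply Rmult_lt_compat_r. apply Rdiv_lt_0_compat; lra. lra. right; field; lra. }
        pose proof (Rle_abs (G s - G x)). unfold E in Hx. unfold e in *. lra.
      * assert (s <= s - e / (Rb + 1)).
        { apply Hl2. intros x Hx. apply Rnot_lt_le. intros Hlt2. apply Hn. eauto. }
        assert (0 < e / (Rb + 1)) by (apply Rdiv_lt_0_compat; lra). lra.
    + apply Rnot_lt_le. intros Hlt. set (e := gk + l - G s).
      assert (He : 0 < e) by (unfold e; lra).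
      set (x := s + e / (Rb + 1)).
      assert (0 < e / (Rb + 1)) by (apply Rdiv_lt_0_compat; lra).
      assert (E x).
      { unfold E. pose proof (HG_lip s x). rewrite (Rabs_right (x - s)) in H0 by (unfold x; lra).
        replace (x - s) with (e / (Rb + 1)) in H0 by (unfold x; ring).
        assert (Rb * (e / (Rb + 1)) < e).
        { apply Rlt_le_trans with ((Rb + 1) * (e / (Rb + 1))).
          apply Rmult_lt_compat_r. lra. lra. right; field; lra. }
        pose proof (Rle_abs (G x - G s)). unfold e in *. lra. }
      pose proof (Hub x H0). unfold x in H1. lra.
Qed.

Lemma cont0_Rmax g : cont0 g -> forall s, 0 <= s -> continuity_pt (fun u => g (Rmax u 0)) s.
Proof.
  intros Hg s Hs. apply eps_cont_pt. intros eps He.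
  destruct (Hg s Hs eps He) as [d [Hd Hu]]. exists d. split; auto.
  intros u Hus. rewrite (Rmax_left s 0) by lra.
  apply Hu. apply Rmax_r.
  unfold Rmax. destruct (Rle_dec u 0). rewrite Rabs_left1 by lra.
  rewrite Rabs_left1 in Hus; [lra|]. lra. auto.
Qed.

Lemma cont0_minus g1 g2 : cont0 g1 -> cont0 g2 -> cont0 (fun s => g1 s - g2 s).
Proof.
  intros H1 H2. apply (cont0_of (fun u => g1 (Rmax u 0) - g2 (Rmax u 0))).
  intros s Hs. exact (continuity_pt_minus _ _ _ (cont0_Rmax g1 H1 s Hs) (cont0_Rmax g2 H2 s Hs)).
  intros u Hu. rewrite Rmax_left by lra. reflexivity.
Qed.

Lemma cont0_mult g1 g2 : cont0 g1 -> cont0 g2 -> cont0 (fun s => g1 s * g2 s).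
Proof.
  intros H1 H2. apply (cont0_of (fun u => g1 (Rmax u 0) * g2 (Rmax u 0))).
  intros s Hs. exact (continuity_pt_mult _ _ _ (cont0_Rmax g1 H1 s Hs) (cont0_Rmax g2 H2 s Hs)).
  intros u Hu. rewrite Rmax_left by lra. reflexivity.
Qed.

Lemma cont0_div g1 g2 : cont0 g1 -> cont0 g2 -> (forall s, 0 <= s -> g2 s <> 0) ->
  cont0 (fun s => g1 s / g2 s).
Proof.
  intros H1 H2 H3. apply (cont0_of (fun u => g1 (Rmax u 0) / g2 (Rmax u 0))).
  intros s Hs. refine (continuity_pt_div _ _ _ (cont0_Rmax g1 H1 s Hs) (cont0_Rmax g2 H2 s Hs) _).
  rewrite Rmax_left by lra. auto.
  intros u Hu. rewrite Rmax_left by lra. reflexivity.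
Qed.

Lemma cont0_comp (phi g : R -> R) : cont0 g -> (forall s, 0 <= s -> continuity_pt phi (g s)) ->
  cont0 (fun s => phi (g s)).
Proof.
  intros H1 H2. apply (cont0_of (fun u => phi (g (Rmax u 0)))).
  intros s Hs. refine (continuity_pt_comp (fun u => g (Rmax u 0)) phi s (cont0_Rmax g H1 s Hs) _).
  rewrite Rmax_left by lra. auto.
  intros u Hu. rewrite Rmax_left by lra. reflexivity.
Qed.

Lemma cont0_const a : cont0 (fun _ => a).
Proof. intros s Hs eps He. exists 1. split. lra. intros. unfold Rminus; rewrite Rplus_opp_r, Rabs_R0. lra. Qed.

Lemma cont0_id : cont0 (fun s => s).
Proof. intros s Hs eps He. exists eps. split. lra. intros. auto. Qed.

Lemma cont0_ext g1 g2 : cont0 g1 -> (forall u, 0 <= u -> g1 u = g2 u) -> cont0 g2.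
Proof.
  intros H He s Hs eps Heps. destruct (H s Hs eps Heps) as [d [Hd Hu]]. exists d. split; auto.
  intros u Hu0 Hus. rewrite <- !He by lra. auto.
Qed.

Lemma lim_eps_le g t : 0 <= t -> (forall eps c, 0 < eps -> 0 < c -> g - eps * t < c) -> g <= 0.
Proof.
  intros Ht H. apply Rnot_lt_le. intros Hg.
  specialize (H (g / (2 * (t + 1))) (g / 2)).
  assert (0 < g / (2 * (t+1))) by (apply Rdiv_lt_0_compat; lra).
  assert (g / (2 * (t + 1)) * t <= g / 2).
  { apply Rmult_le_reg_r with (2 * (t+1)). lra.
    replace (g / (2 * (t + 1)) * t * (2 * (t + 1))) with (g * t) by (field; lra).
    replace (g / 2 * (2 * (t + 1))) with (g * t + g) by field. lra. }
  specialize (H H0 ltac:(lra)). lra.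
Qed.

Lemma Rmult_le_0_r a b : a <= 0 -> 0 <= b -> a * b <= 0.
Proof. intros; nra. Qed.

Lemma cont0_plus g1 g2 : cont0 g1 -> cont0 g2 -> cont0 (fun s => g1 s + g2 s).
Proof.
  intros H1 H2. apply (cont0_ext (fun s => g1 s - (0 - g2 s))).
  apply cont0_minus; auto. apply cont0_minus; auto. apply cont0_const. intros; ring.
Qed.

Section Dyn.
Variables (v v' : R -> R).
Hypothesis Hv_der : forall r, 0 < r -> derivable_pt_lim v r (v' r).
Hypothesis Hv_decr : forall a b, 0 <= a -> a < b -> v b < v a.
Hypothesis Hv3 : forall a b, 0 <= a -> a <= b -> b * v' b <= a * v' a.
Variables (N : nat) (l Rb : R) (x : nat -> R -> R).
Hypothesis Hl : 0 < l.
Hypothesis Hgap : forall i, (i < N)%nat -> forall t, 0 <= t -> x i t < x (S i) t.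
Hypothesis Hc0 : forall i, (i <= N)%nat -> forall eps, 0 < eps -> exists d, 0 < d /\
      forall t, 0 <= t < d -> Rabs (x i t - x i 0) < eps.
Hypothesis HdN : forall t, 0 < t -> derivable_pt_lim (x N) t (v 0).
Hypothesis Hdi : forall i, (i < N)%nat -> forall t, 0 < t ->
      derivable_pt_lim (x i) t (v (ydisc x l i t)).
Hypothesis HY0 : forall k, (k < N)%nat -> ydisc x l k 0 <= Rb.

Lemma v_noninc a b : 0 <= a -> a <= b -> v b <= v a.
Proof. intros Ha Hab. destruct Hab. left. apply Hv_decr; auto. subst; lra. Qed.

Lemma v'_nonpos r : 0 < r -> v' r <= 0.
Proof.
  intros Hr. apply Rnot_lt_le. intros Hp.
  destruct (Hv_der r Hr (v' r) Hp) as [d Hd].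
  specialize (Hd (d/2)). assert (0 < d) by apply cond_pos.
  assert (d/2 <> 0) by lra. assert (Rabs (d/2) < d) by (rewrite Rabs_right; lra).
  specialize (Hd H0 H1). apply Rabs_def2 in Hd.
  assert (v (r + d/2) < v r) by (apply Hv_decr; lra).
  assert ((v (r + d / 2) - v r) / (d / 2) < 0).
  { unfold Rdiv. apply Rmult_neg_pos. lra. apply Rinv_0_lt_compat; lra. }
  lra.
Qed.

Definition y k s := ydisc x l k s.
Definition W k s := if Nat.ltb k N then v (y k s) else v 0.
Definition Zr k s := (W (S k) s - W k s) / (x (S k) s - x k s).
Definition Wp k s := if Nat.ltb k N then v' (y k s) * (- y k s * Zr k s) else 0.

Lemma y_pos k s : (k < N)%nat -> 0 <= s -> 0 < y k s.
Proof.
  intros Hk Hs. unfold y, ydisc. apply Rdiv_lt_0_compat; auto. pose proof (Hgap k Hk s Hs). lra.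
Qed.

Lemma W_lt k s : (k < N)%nat -> W k s = v (y k s).
Proof. intros Hk. unfold W. apply Nat.ltb_lt in Hk. rewrite Hk. reflexivity. Qed.
Lemma W_N s : W N s = v 0.
Proof. unfold W. rewrite Nat.ltb_irrefl. reflexivity. Qed.
Lemma Wp_lt k s : (k < N)%nat -> Wp k s = v' (y k s) * (- y k s * Zr k s).
Proof. intros Hk. unfold Wp. apply Nat.ltb_lt in Hk. rewrite Hk. reflexivity. Qed.
Lemma Wp_N s : Wp N s = 0.
Proof. unfold Wp. rewrite Nat.ltb_irrefl. reflexivity. Qed.

Lemma x_cont0 k : (k <= N)%nat -> cont0 (x k).
Proof.
  intros Hk s Hs eps He. destruct Hs as [Hs|Hs].
  - assert (Hd : derivable_pt_lim (x k) s (W k s)).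
    { destruct (Nat.eq_dec k N). subst. rewrite W_N. auto. rewrite W_lt by lia. apply Hdi; auto; lia. }
    assert (Hc : continuity_pt (x k) s) by (apply derivable_continuous_pt; exists (W k s); exact Hd).
    destruct (cont_pt_eps _ _ Hc eps He) as [d [Hd0 Hu]]. eauto.
  - subst. destruct (Hc0 k Hk eps He) as [d [Hd Hu]]. exists d. split; auto.
    intros u Hu0 Hus. rewrite Rminus_0_r, Rabs_right in Hus by lra. apply Hu. lra.
Qed.

Lemma d_pos k s : (k < N)%nat -> 0 <= s -> x (S k) s - x k s <> 0.
Proof. intros. pose proof (Hgap k H s H0). lra. Qed.

Lemma y_cont0 k : (k < N)%nat -> cont0 (y k).
Proof.
  intros Hk. unfold y, ydisc. apply (cont0_div (fun _ => l)). apply cont0_const.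
  apply cont0_minus; apply x_cont0; lia. intros; apply d_pos; auto.
Qed.

Lemma W_cont0 k : (k <= N)%nat -> cont0 (W k).
Proof.
  intros Hk. destruct (Nat.eq_dec k N).
  - subst. apply (cont0_ext (fun _ => v 0)). apply cont0_const. intros; rewrite W_N; auto.
  - apply (cont0_ext (fun s => v (y k s))).
    apply cont0_comp. apply y_cont0; lia. intros s Hs. apply derivable_continuous_pt.
    exists (v' (y k s)). apply Hv_der. apply y_pos; auto; lia.
    intros; rewrite W_lt; auto; lia.
Qed.

Lemma Z_cont0 k : (k < N)%nat -> cont0 (Zr k).
Proof.
  intros Hk. unfold Zr. apply cont0_div. apply cont0_minus; apply W_cont0; lia.
  apply cont0_minus; apply x_cont0; lia. intros; apply d_pos; auto.
Qed.

Lemma Dx k s : (k <= N)%nat -> 0 < s -> derivable_pt_lim (x k) s (W k s).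
Proof.
  intros Hk Hs. destruct (Nat.eq_dec k N). subst. rewrite W_N. auto. rewrite W_lt by lia. apply Hdi; auto; lia.
Qed.

Lemma Dd k s : (k < N)%nat -> 0 < s ->
  derivable_pt_lim (fun u => x (S k) u - x k u) s (W (S k) s - W k s).
Proof.
  intros Hk Hs. exact (derivable_pt_lim_minus _ _ _ _ _ (Dx (S k) s ltac:(lia) Hs) (Dx k s ltac:(lia) Hs)).
Qed.

Lemma Dy k s : (k < N)%nat -> 0 < s -> derivable_pt_lim (y k) s (- y k s * Zr k s).
Proof.
  intros Hk Hs.
  pose proof (derivable_pt_lim_div (fct_cte l) _ s _ _ (derivable_pt_lim_const l s) (Dd k s Hk Hs)
     (d_pos k s Hk ltac:(lra))) as H.
  eapply dlim_ext. exact H. intros u. reflexivity.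
  unfold y, ydisc, Zr, fct_cte. unfold Rsqr. field. apply d_pos; auto; lra.
Qed.

Lemma DW k s : (k <= N)%nat -> 0 < s -> derivable_pt_lim (W k) s (Wp k s).
Proof.
  intros Hk Hs. destruct (Nat.eq_dec k N).
  - subst. rewrite Wp_N. eapply dlim_ext. apply (derivable_pt_lim_const (v 0) s).
    intros u. rewrite W_N. reflexivity. reflexivity.
  - rewrite Wp_lt by lia.
    pose proof (derivable_pt_lim_comp (y k) v s _ _ (Dy k s ltac:(lia) Hs)
       (Hv_der (y k s) (y_pos k s ltac:(lia) ltac:(lra)))) as H.
    eapply dlim_ext. exact H. intros u. unfold comp. rewrite W_lt by lia. reflexivity. reflexivity.
Qed.

Lemma DZ k s : (k < N)%nat -> 0 < s ->
  derivable_pt_lim (Zr k) s ((Wp (S k) s - Wp k s) / (x (S k) s - x k s) - Zr k s * Zr k s).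
Proof.
  intros Hk Hs.
  pose proof (derivable_pt_lim_div _ _ s _ _
     (derivable_pt_lim_minus _ _ _ _ _ (DW (S k) s ltac:(lia) Hs) (DW k s ltac:(lia) Hs))
     (Dd k s Hk Hs) (d_pos k s Hk ltac:(lra))) as H.
  eapply dlim_ext. exact H. intros u. reflexivity.
  unfold Zr, minus_fct. unfold Rsqr. field. apply d_pos; auto; lra.
Qed.

Lemma Z_nonneg_of k s : (k < N)%nat -> 0 <= s -> ((S k < N)%nat -> y (S k) s <= y k s) -> 0 <= Zr k s.
Proof.
  intros Hk Hs Hy. unfold Zr. assert (0 < x (S k) s - x k s) by (pose proof (Hgap k Hk s Hs); lra).
  assert (W k s <= W (S k) s).
  { rewrite W_lt by auto. destruct (Nat.eq_dec (S k) N).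
    - rewrite e, W_N. apply v_noninc. lra. left; apply y_pos; auto.
    - rewrite W_lt by lia. apply v_noninc. left; apply y_pos; auto; lia. apply Hy; lia. }
  unfold Rdiv. apply Rmult_le_pos. lra. left; apply Rinv_0_lt_compat; lra.
Qed.

Lemma MP k s : (k < N)%nat -> 0 <= s -> y k s <= Rb.
Proof.
  intros Hk Hs.
  assert (H : y k s - Rb <= 0).
  { apply (lim_eps_le _ s Hs). intros eps c He Hc.
    assert (Hcr : forall kk, (kk < N)%nat -> y kk s - eps * s < Rb + c).
    { intros kk Hkk.
      apply (crossing N (fun k u => y k u - eps * u) (Rb + c)); auto.
      - intros k' Hk'. apply cont0_minus. apply y_cont0; auto.
        apply cont0_mult. apply cont0_const. apply cont0_id.
      - intros k' Hk'. pose proof (HY0 k' Hk'). unfold y. lra.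
      - intros i tau Hi Htau Heq Hall. exists (- y i tau * Zr i tau - eps * 1). split.
        + assert (0 <= Zr i tau).
          { apply Z_nonneg_of; auto. lra. intros HSi. pose proof (Hall (S i) HSi). lra. }
          pose proof (y_pos i tau Hi ltac:(lra)). nra.
        + apply (derivable_pt_lim_minus (y i) (fun u => eps * u)). apply Dy; auto.
          apply (derivable_pt_lim_scal id eps tau 1). apply derivable_pt_lim_id. }
    specialize (Hcr k Hk). lra. }
  lra.
Qed.

Lemma OL k s : (k < N)%nat -> 0 < s -> s * Zr k s <= 1.
Proof.
  intros Hk Hs. apply Rnot_lt_le. intros Hlt.
  set (c := (1 + s * Zr k s) / 2).
  assert (Hc : 1 < c) by (unfold c; lra).
  assert (s * Zr k s < c).
  { apply (crossing N (fun k u => u * Zr k u) c); auto; try lra.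
    - intros k' Hk'. apply cont0_mult. apply cont0_id. apply Z_cont0; auto.
    - intros k' Hk'. lra.
    - intros i tau Hi Htau Heq Hall.
      assert (Hd : 0 < x (S i) tau - x i tau) by (pose proof (Hgap i Hi tau ltac:(lra)); lra).
      set (d := x (S i) tau - x i tau) in *.
      set (Zi := Zr i tau) in *.
      assert (HZi : 0 < Zi).
      { apply Rmult_lt_reg_l with tau. lra. rewrite Rmult_0_r. lra. }
      assert (Hdiff : Wp (S i) tau - Wp i tau <= 0).
      { rewrite (Wp_lt i) by auto. fold Zi.
        pose proof (y_pos i tau Hi ltac:(lra)). pose proof (v'_nonpos (y i tau) H).
        destruct (Nat.eq_dec (S i) N).
        - rewrite e, Wp_N. assert (0 <= y i tau * Zi) by nra. nra.
        - rewrite Wp_lt by lia.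
          pose proof (y_pos (S i) tau ltac:(lia) ltac:(lra)).
          pose proof (v'_nonpos (y (S i) tau) H1).
          assert (Hyy : y (S i) tau < y i tau).
          { apply Rnot_le_lt. intros Hle.
            assert (v (y (S i) tau) <= v (y i tau)) by (apply v_noninc; lra).
            assert (W (S i) tau <= W i tau) by (rewrite !W_lt by lia; lra).
            assert (Zi <= 0). { unfold Zi, Zr. fold d. unfold Rdiv. apply Rmult_le_0_r. lra.
              left; apply Rinv_0_lt_compat; lra. }
            lra. }
          pose proof (Hv3 (y (S i) tau) (y i tau) ltac:(lra) ltac:(lra)).
          pose proof (Hall (S i) ltac:(lia)).
          assert (HZZ : Zr (S i) tau <= Zi).
          { apply Rmult_le_reg_l with tau. lra. lra. }
          set (a1 := - (y (S i) tau * v' (y (S i) tau))).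
          set (a0 := - (y i tau * v' (y i tau))).
          assert (Ha1 : 0 <= a1) by (unfold a1; nra).
          assert (Ha : a1 <= a0) by (unfold a1, a0; lra).
          replace (v' (y (S i) tau) * (- y (S i) tau * Zr (S i) tau) - v' (y i tau) * (- y i tau * Zi))
            with (a1 * Zr (S i) tau - a0 * Zi) by (unfold a1, a0; ring).
          destruct (Rle_dec 0 (Zr (S i) tau)).
          + assert (a1 * Zr (S i) tau <= a0 * Zr (S i) tau) by (apply Rmult_le_compat_r; lra).
            assert (a0 * Zr (S i) tau <= a0 * Zi) by (apply Rmult_le_compat_l; lra). lra.
          + assert (a1 * Zr (S i) tau <= 0) by nra. assert (0 <= a0 * Zi) by nra. lra. }
      exists (1 * Zi + tau * ((Wp (S i) tau - Wp i tau) / d - Zi * Zi)). split.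
      + assert ((Wp (S i) tau - Wp i tau) / d <= 0).
        { unfold Rdiv. apply Rmult_le_0_r. lra. left; apply Rinv_0_lt_compat; lra. }
        assert (tau * Zi = c) by lra.
        assert (tau * ((Wp (S i) tau - Wp i tau) / d) <= 0) by nra.
        nra.
      + apply (derivable_pt_lim_mult id (Zr i)). apply derivable_pt_lim_id. apply DZ; auto. }
  unfold c in *; lra.
Qed.

Lemma X0 s : (0 < N)%nat -> 0 <= s -> x 0 0 + v Rb * s <= x 0 s.
Proof.
  intros HN Hs.
  assert (H : x 0%nat 0 - x 0%nat s + v Rb * s <= 0).
  { apply (lim_eps_le _ s Hs). intros eps c He Hc.
    apply (crossing 1 (fun _ u => x 0%nat 0 - x 0%nat u + v Rb * u - eps * u) c) with (k := 0%nat); auto; try lia.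
    - intros k' Hk'. apply cont0_minus. apply cont0_plus.
      apply cont0_minus. apply cont0_const. apply x_cont0; lia.
      apply cont0_mult; [apply cont0_const|apply cont0_id].
      apply cont0_mult; [apply cont0_const|apply cont0_id].
    - intros. lra.
    - intros i tau Hi Htau Heq Hall. exists (0 - W 0 tau + v Rb * 1 - eps * 1). split.
      + rewrite W_lt by auto. assert (v Rb <= v (y 0 tau)).
        { apply v_noninc. left; apply y_pos; auto; lra. apply MP; auto; lra. }
        lra.
      + apply derivable_pt_lim_minus. apply derivable_pt_lim_plus. apply derivable_pt_lim_minus.
        apply derivable_pt_lim_const. apply Dx; auto; lia.
        apply (derivable_pt_lim_scal id). apply derivable_pt_lim_id.
        apply (derivable_pt_lim_scal id). apply derivable_pt_lim_id. }
  lra.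
Qed.

Lemma XN s : 0 <= s -> x N s <= x N 0 + v 0 * s.
Proof.
  intros Hs.
  assert (H : x N s - x N 0 - v 0 * s <= 0).
  { apply (lim_eps_le _ s Hs). intros eps c He Hc.
    apply (crossing 1 (fun _ u => x N u - x N 0 - v 0 * u - eps * u) c) with (k := 0%nat); auto; try lia.
    - intros k' Hk'. apply cont0_minus. apply cont0_minus.
      apply cont0_minus. apply x_cont0; lia. apply cont0_const.
      apply cont0_mult; [apply cont0_const|apply cont0_id].
      apply cont0_mult; [apply cont0_const|apply cont0_id].
    - intros. lra.
    - intros i tau Hi Htau Heq Hall. exists (W N tau - 0 - v 0 * 1 - eps * 1). split.
      + rewrite W_N. lra.
      + apply derivable_pt_lim_minus. apply derivable_pt_lim_minus. apply derivable_pt_lim_minus.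
        apply Dx; auto; lia. apply derivable_pt_lim_const.
        apply (derivable_pt_lim_scal id). apply derivable_pt_lim_id.
        apply (derivable_pt_lim_scal id). apply derivable_pt_lim_id. }
  lra.
Qed.
End Dyn.

Lemma sumR_abs_pos M (a : nat -> R) :
  sumR M (fun k => Rabs (a k)) + sumR M a = 2 * sumR M (fun k => Rmax (a k) 0).
Proof.
  induction M; simpl. lra.
  assert (Rabs (a M) + a M = 2 * Rmax (a M) 0).
  { unfold Rmax. destruct (Rle_dec (a M) 0). rewrite Rabs_left1 by lra. lra. rewrite Rabs_right by lra. lra. }
  lra.
Qed.

Lemma stepv_bound c N Rb : 0 <= Rb -> (forall j, (j < N)%nat -> 0 <= c j <= Rb) ->
  forall k, 0 <= stepv c N k <= Rb.
Proof.
  intros HR Hc k. destruct k; simpl. lra. destruct (Nat.ltb k N) eqn:E. apply Hc. apply Nat.ltb_lt; auto. lra.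
Qed.

Theorem proposition3p11
  (v v' : R -> R)
  (Hv_der : forall r, 0 < r -> derivable_pt_lim v r (v' r))
  (Hv_der0 : forall eps, 0 < eps -> exists d, 0 < d /\
      forall h, 0 < h < d -> Rabs ((v h - v 0) / h - v' 0) < eps)
  (Hv'_cont : forall r, 0 <= r -> forall eps, 0 < eps -> exists d, 0 < d /\
      forall s, 0 <= s -> Rabs (s - r) < d -> Rabs (v' s - v' r) < eps)
  (Hv_decr : forall a b, 0 <= a -> a < b -> v b < v a)
  (Hv3 : forall a b, 0 <= a -> a <= b -> b * v' b <= a * v' a)
  (L : R) (HL : 0 < L)
  (G : R -> R) (Rb xmin xmax : R)
  (HG_mono : forall a b, a <= b -> G a <= G b)
  (HG_lip : forall a b, Rabs (G b - G a) <= Rb * Rabs (b - a))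
  (HG_Rmin : forall R', (forall a b, Rabs (G b - G a) <= R' * Rabs (b - a)) -> Rb <= R')
  (Hxminmax : xmin <= xmax)
  (HG_left : forall x, x <= xmin -> G x = 0)
  (HG_right : forall x, xmax <= x -> G x = L)
  (HG_min : forall x, xmin < x -> 0 < G x)
  (HG_max : forall x, x < xmax -> G x < L)
  (delta : R) (Hdelta : 0 < delta) :
  forall (n : nat) (x : nat -> R -> R),
    FTL_solution v (Nn n) (elln L n) (xbar G xmin (elln L n)) x ->
    forall t, delta <= t ->
      let C := 3 * (v 0 - v Rb) + 2 * ((xmax - xmin) / delta) in
      TV (fun X => v (rho_hat x (elln L n) (Nn n) t X))
        = TV (fun z => v (rho_check x (elln L n) (Nn n) t z)) /\
      TV_le (fun X => v (rho_hat x (elln L n) (Nn n) t X)) C /\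
      TV_le (fun z => v (rho_check x (elln L n) (Nn n) t z)) C /\
      (forall X, v Rb <= v (rho_hat x (elln L n) (Nn n) t X) <= v 0) /\
      (forall z, 0 <= z <= L ->
         v Rb <= v (rho_check x (elln L n) (Nn n) t z) <= v 0).
Proof.
  intros n x HFTL t Ht C.
  destruct HFTL as [H0 [Hgap [Hc0 [HdN Hdi]]]].
  set (N := Nn n) in *. set (l := elln L n) in *.
  assert (HN1 : (1 <= N)%nat).
  { unfold N, Nn. pose proof (Nat.pow_nonzero 2 n ltac:(lia)). lia. }
  assert (H2n : 0 < 2 ^ n) by (apply pow_lt; lra).
  assert (Hl : 0 < l) by (unfold l, elln; apply Rdiv_lt_0_compat; lra).
  assert (HNl : INR N * l = L).
  { unfold N, Nn, l, elln. rewrite pow_INR. replace (INR 2) with 2 by (simpl; ring). field. lra. }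
  assert (HRb : 0 <= Rb).
  { pose proof (HG_lip 0 1). pose proof (Rabs_pos (G 1 - G 0)).
    rewrite Rminus_0_r, Rabs_R1 in H. lra. }
  pose proof (xbar_props G Rb xmin xmax L l N HG_lip HRb Hl HNl HG_left HG_right) as HX.
  assert (HY0 : forall k, (k < N)%nat -> ydisc x l k 0 <= Rb).
  { intros k Hk. unfold ydisc. rewrite !H0 by lia.
    destruct (HX k ltac:(lia)) as [Gk _]. destruct (HX (S k) ltac:(lia)) as [GSk _].
    pose proof (Hgap k Hk 0 (Rle_refl 0)). rewrite !H0 in H by lia.
    set (gap := xbar G xmin l (S k) - xbar G xmin l k).
    pose proof (HG_lip (xbar G xmin l k) (xbar G xmin l (S k))).
    rewrite GSk, Gk, S_INR in H1. fold gap in H1.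
    rewrite (Rabs_right gap) in H1 by (unfold gap; lra).
    replace (INR k * l + l - INR k * l) with l in H1 by ring.
    rewrite Rabs_right in H1 by lra.
    apply Rmult_le_reg_r with gap. unfold gap; lra.
    replace (l / gap * gap) with l by (field; unfold gap; lra). lra. }
  assert (Htpos : 0 < t) by lra.
  assert (HMP : forall k s, (k < N)%nat -> 0 <= s -> 0 < ydisc x l k s <= Rb).
  { intros k s Hk Hs. split. apply (y_pos N l x Hl Hgap k s Hk Hs).
    exact (MP v Hv_decr N l Rb x Hl Hgap Hc0 HdN Hdi HY0 k s Hk Hs). }
  assert (HOL := OL v v' Hv_der Hv_decr Hv3 N l x Hl Hgap Hc0 HdN Hdi).
  assert (HX0 := X0 v Hv_decr N l Rb x Hl Hgap Hc0 HdN Hdi HY0 t ltac:(lia) ltac:(lra)).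
  assert (HXN := XN v N l x Hc0 HdN Hdi t ltac:(lra)).
  set (c := fun i => ydisc x l i t).
  assert (Hp1 : forall i, (i < N)%nat -> x i t < x (S i) t) by (intros; apply Hgap; auto; lra).
  assert (Hp2 : forall i, (i < N)%nat -> INR i * l < INR (S i) * l) by (intros; rewrite S_INR; lra).
  destruct (TV_step (fun i => x i t) c N v Hp1) as [E1 T1].
  destruct (TV_step (fun i => INR i * l) c N v Hp2) as [E2 T2].
  assert (HW : forall k, v (stepv c N (S k)) = W v N l x k t).
  { intros k. unfold W, stepv, c, y. destruct (Nat.ltb k N); reflexivity. }
  assert (Hbound : PSt c N v (S N) <= C).
  { unfold PSt.
    set (a := fun k => v (stepv c N (S k)) - v (stepv c N k)).
    pose proof (sumR_abs_pos (S N) a) as Hab.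
    assert (Hsum : sumR (S N) a = 0).
    { unfold a. rewrite (sumR_tele (S N) (fun k => v (stepv c N k))). simpl.
      rewrite Nat.ltb_irrefl. ring. }
    rewrite (sumR_shift N (fun k => Rmax (a k) 0)) in Hab.
    change (sumR (S N) (fun k => Rabs (v (stepv c N (S k)) - v (stepv c N k)))) with (sumR (S N) (fun k => Rabs (a k))).
    assert (Ha0 : Rmax (a 0%nat) 0 = 0).
    { apply Rmax_right. unfold a. simpl. destruct (Nat.ltb 0 N) eqn:E.
      apply Rle_minus. apply (v_noninc v Hv_decr). lra. pose proof (HMP 0%nat t ltac:(lia) ltac:(lra)). unfold c; lra. lra. }
    assert (Hle : sumR N (fun k => Rmax (a (S k)) 0) <= sumR N (fun k => x (S k) t / t - x k t / t)).
    { apply sumR_le. intros i Hi. apply Rmax_lub.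
      - unfold a. rewrite !HW. pose proof (HOL i t Hi Htpos). unfold Zr in H.
        assert (Hd : 0 < x (S i) t - x i t) by (pose proof (Hp1 i Hi); lra).
        set (dd := x (S i) t - x i t) in *.
        set (D := W v N l x (S i) t - W v N l x i t) in *.
        replace (x (S i) t / t - x i t / t) with (dd / t) by (unfold dd; field; lra).
        apply Rmult_le_reg_l with t. lra.
        replace (t * (dd / t)) with dd by (field; lra).
        replace D with (D / dd * dd) by (field; lra).
        replace (t * (D / dd * dd)) with ((t * (D / dd)) * dd) by ring.
        assert (t * (D / dd) * dd <= 1 * dd) by (apply Rmult_le_compat_r; lra). lra.
      - assert (x i t < x (S i) t) by auto.
        unfold Rminus. rewrite <- Rdiv_opp_l, <- Rdiv_plus_distr. unfold Rdiv. apply Rmult_le_pos. lra. left; apply Rinv_0_lt_compat; lra. }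
    rewrite (sumR_tele N (fun k => x k t / t)) in Hle.
    cbv beta in Hab. rewrite Ha0 in Hab.
    assert (HN0 : x N 0 = xbar G xmin l N) by (apply H0; lia).
    destruct (HX N ltac:(lia)) as [_ HxN]. specialize (HxN ltac:(lia)).
    assert (H00 : x 0%nat 0 = xmin) by (rewrite H0 by lia; reflexivity).
    assert (Hv0 : v Rb <= v 0) by (apply (v_noninc v Hv_decr); lra).
    assert (Hdiv : (x N t - x 0%nat t) / t <= (xmax - xmin) / delta + (v 0 - v Rb)).
    { apply Rle_trans with ((xmax - xmin) / t + (v 0 - v Rb)).
      - apply Rmult_le_reg_l with t. lra.
        replace (t * ((x N t - x 0%nat t) / t)) with (x N t - x 0%nat t) by (field; lra).
        replace (t * ((xmax - xmin) / t + (v 0 - v Rb))) with (xmax - xmin + (v 0 - v Rb) * t) by (field; lra).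
        lra.
      - apply Rplus_le_compat_r. unfold Rdiv. apply Rmult_le_compat_l. lra.
        apply Rinv_le_contravar; lra. }
    replace (x N t / t - x 0%nat t / t) with ((x N t - x 0%nat t) / t) in Hle by (field; lra).
    unfold C. lra. }
  split; [|split; [|split; [|split]]].
  - exact (eq_trans E1 (eq_sym E2)).
  - intros li Hli. apply Rle_trans with (PSt c N v (S N)). exact (T1 li Hli). exact Hbound.
  - intros li Hli. apply Rle_trans with (PSt c N v (S N)). exact (T2 li Hli). exact Hbound.
  - intros X. destruct (pos_exists (fun i => x i t) N X) as [k Hk].
    change (rho_hat x l N t X) with (Fst (fun i => x i t) c N X).
    rewrite (Fst_pos _ c N Hp1 X k Hk).
    assert (Hs : 0 <= stepv c N k <= Rb).
    { apply stepv_bound; auto. intros j Hj. unfold c. pose proof (HMP j t Hj ltac:(lra)). lra. }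
    split; apply (v_noninc v Hv_decr); lra.
  - intros z _. destruct (pos_exists (fun i => INR i * l) N z) as [k Hk].
    change (rho_check x l N t z) with (Fst (fun i => INR i * l) c N z).
    rewrite (Fst_pos _ c N Hp2 z k Hk).
    assert (Hs : 0 <= stepv c N k <= Rb).
    { apply stepv_bound; auto. intros j Hj. unfold c. pose proof (HMP j t Hj ltac:(lra)). lra. }
    split; apply (v_noninc v Hv_decr); lra.
Qed.
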